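(* Under the setting of Lemma 1 (a finite point set $P=\{p_1<\dots<p_n\}\subset\mathbb{R}$, a finite set $S'$ of intervals with no endpoint in $P$ such that each gap $(p_{i-1},p_i)$, $2\le i\le n$, contains an endpoint of some interval of $S'$; $Q_0$ the set of points of $P$ contained in no interval of $S'$; $Q_1,\dots,Q_k$ the sets of at least two points of $P\setminus Q_0$ sharing the same code with respect to $S'$), for a nonempty $Q_i$ let $I(Q_i)$ denote the closed interval from the smallest to the largest point of $Q_i$. Then for any two distinct nonempty sets $Q_i,Q_j$ ($i,j\in\{0,\dots,k\}$), either $I(Q_i)\cap I(Q_j)=\emptyset$, or one of them, say $I(Q_j)$, lies strictly between two consecutive points of the other set $Q_i$ (consecutive in the order of $Q_i$).
   Context: The code of a point $p$ with respect to a set $S'$ of intervals is $\{s\in S': p\in s\}$. *)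

(* Defs.v *)
From mathcomp Require Import all_boot all_order all_algebra.
Set Implicit Arguments. Unset Strict Implicit. Unset Printing Implicit Defensive.
Import Order.TTheory GRing.Theory Num.Theory.
Local Open Scope ring_scope.

Section Defs.
Variable R : realFieldType.

(* An interval is encoded by its pair of endpoints (l, r), l < r;
   membership is closed; since no endpoint lies in P, open/closed
   does not matter for points of P. *)
Definition in_itv (s : R * R) (p : R) : bool := (s.1 <= p) && (p <= s.2).

Definition code (S : seq (R * R)) (p : R) : seq (R * R) :=
  [seq s <- S | in_itv s p].

Definition code_class (P : seq R) (S : seq (R * R)) (c : seq (R * R)) : seq R :=
  [seq q <- P | code S q == c].

Definition Q0 (P : seq R) (S : seq (R * R)) : seq R := code_class P S [::].

Definition isQ (P : seq R) (S : seq (R * R)) (Q : seq R) : Prop :=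
  Q = Q0 P S \/
  exists p, [/\ p \in P, code S p != [::], Q = code_class P S (code S p)
               & (2 <= size Q)%N].

Definition in_hull (Q : seq R) (x : R) : Prop :=
  exists a b, [/\ a \in Q, b \in Q & a <= x <= b].

Definition between_consec (Qi Qj : seq R) : Prop :=
  exists a b, [/\ a \in Qi, b \in Qi, a < b,
    (forall q, q \in Qi -> ~ (a < q < b))
  & (forall x, in_hull Qj x -> a < x < b)].

End Defs.

(* Main.v *)
Require Import Defs.
From mathcomp Require Import all_boot all_order all_algebra.
From Stdlib Require Import Classical.
Import Order.TTheory GRing.Theory Num.Theory.
Local Open Scope ring_scope.

Section Aux.
Variable R : realFieldType.

Lemma ex_max (p : pred R) (s : seq R) x : x \in s -> p x ->
  exists2 m, (m \in s) && p m & forall y, y \in s -> p y -> y <= m.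
Proof.
elim: s x => [//|h t IH] x; rewrite inE => /orP [/eqP -> | xt] px.
  case: (boolP (has p t)) => [/hasP [z zt pz] | /hasPn np].
    have [m /andP [mt pm] Hm] := IH z zt pz.
    case: (leP h m) => hm.
      exists m; first by rewrite inE mt orbT pm.
      move=> y; rewrite inE => /orP [/eqP -> //| yt] py; exact: Hm.
    exists h; first by rewrite inE eqxx px.
    move=> y; rewrite inE => /orP [/eqP -> //| yt] py.
    by apply: le_trans (Hm _ yt py) (ltW hm).
  exists h; first by rewrite inE eqxx px.
  move=> y; rewrite inE => /orP [/eqP -> //| yt] py.
  by move: (np y yt); rewrite py.
have [m /andP [mt pm] Hm] := IH x xt px.
case: (boolP (p h)) => ph.
  case: (leP h m) => hm.
    exists m; first by rewrite inE mt orbT pm.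
    move=> y; rewrite inE => /orP [/eqP -> //| yt] py; exact: Hm.
  exists h; first by rewrite inE eqxx ph.
  move=> y; rewrite inE => /orP [/eqP -> //| yt] py.
  by apply: le_trans (Hm _ yt py) (ltW hm).
exists m; first by rewrite inE mt orbT pm.
move=> y; rewrite inE => /orP [/eqP yh| yt] py; last exact: Hm.
by move: ph; rewrite -yh py.
Qed.

Lemma ex_min (p : pred R) (s : seq R) x : x \in s -> p x ->
  exists2 m, (m \in s) && p m & forall y, y \in s -> p y -> m <= y.
Proof.
move=> xs px.
have px' : p (- - x) by rewrite opprK.
have [m /andP [ms pm] Hm] := @ex_max (fun y => p (- y)) [seq - y | y <- s] (- x)
  (map_f _ xs) px'.
move/mapP: ms => [z zs mz]; rewrite mz opprK in pm.
exists z; first by rewrite zs pm.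
move=> y ys py; rewrite -lerN2 -mz; apply: Hm; first exact: map_f.
by rewrite opprK.
Qed.

Lemma core (A B : seq R) (s : R * R) :
  (forall a, a \in A -> Defs.in_itv s a) -> (forall b, b \in B -> ~~ Defs.in_itv s b) ->
  (forall x, ~ (in_hull A x /\ in_hull B x)) \/ between_consec B A.
Proof.
move=> HA HB.
case: (classic (exists x, in_hull A x /\ in_hull B x)) => H;
  last by left => x Hx; apply: H; exists x.
right; case: H => x [[a1 [a2 [a1A a2A /andP [h1 h2]]]] [b1 [b2 [b1B b2B /andP [h3 h4]]]]].
move: (HA _ a1A) (HA _ a2A) (HB _ b1B) (HB _ b2B); rewrite /Defs.in_itv.
move=> /andP [s1a1 _] /andP [_ a2s2].
rewrite negb_and -!ltNge => /orP [b1s|b1s]; last first.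
  by exfalso; move: (lt_le_trans b1s (le_trans h3 (le_trans h2 a2s2))); rewrite ltxx.
rewrite negb_and -!ltNge => /orP [b2s|b2s].
  by exfalso; move: (lt_le_trans b2s (le_trans s1a1 (le_trans h1 h4))); rewrite ltxx.
have [m1 /andP [m1B m1s] Hm1] := @ex_max (fun y => y < s.1) B b1 b1B b1s.
have [m2 /andP [m2B m2s] Hm2] := @ex_min (fun y => s.2 < y) B b2 b2B b2s.
have s12 : s.1 <= s.2 by apply: le_trans s1a1 (le_trans h1 (le_trans h2 a2s2)).
exists m1, m2; split => //.
- exact: lt_trans m1s (le_lt_trans s12 m2s).
- move=> q qB /andP [q1 q2]; move: (HB _ qB); rewrite /Defs.in_itv negb_and -!ltNge.
  case/orP => qs.
    by move: (lt_le_trans q1 (Hm1 q qB qs)); rewrite ltxx.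
  by move: (lt_le_trans q2 (Hm2 q qB qs)); rewrite ltxx.
- move=> y [c1 [c2 [c1A c2A /andP [y1 y2]]]].
  move: (HA _ c1A) (HA _ c2A); rewrite /Defs.in_itv => /andP [e1 _] /andP [_ e2].
  rewrite (lt_le_trans m1s (le_trans e1 y1)) /=.
  exact: le_lt_trans (le_trans y2 e2) m2s.
Qed.

Lemma isQ_class (P : seq R) S Q : isQ P S Q -> exists c, Q = code_class P S c.
Proof. by case=> [->|[p [_ _ -> _]]]; [exists [::] | exists (code S p)]. Qed.

End Aux.

Lemma mem_class (R : realFieldType) (P : seq R) S c q :
  q \in code_class P S c -> code S q = c.
Proof. by rewrite mem_filter => /andP [/eqP -> _]. Qed.

Lemma code_diff (R : realFieldType) (S : seq (R * R)) p q :
  code S p != code S q -> exists2 s, s \in S & Defs.in_itv s p != Defs.in_itv s q.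
Proof.
move=> H; case: (boolP (has (fun s => Defs.in_itv s p != Defs.in_itv s q) S)).
  by move/hasP => [s sS Hs]; exists s.
move/hasPn => Hn; exfalso; move/eqP: H; apply; apply: eq_in_filter => s sS.
by move: (Hn s sS); rewrite negbK => /eqP.
Qed.

Lemma itv_code (R : realFieldType) (S : seq (R * R)) s p q :
  s \in S -> code S p = code S q -> Defs.in_itv s p = Defs.in_itv s q.
Proof.
move=> sS H.
have : (s \in code S p) = (s \in code S q) by rewrite H.
by rewrite !mem_filter sS !andbT.
Qed.

Theorem lemma2 (R : realFieldType) (P : seq R) (S : seq (R * R))
  (Hitv : forall s, s \in S -> s.1 < s.2)
  (Hend : forall s, s \in S -> (s.1 \notin P) && (s.2 \notin P))
  (Hgap : forall p q, p \in P -> q \in P -> p < q ->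
            (forall r, r \in P -> ~ (p < r < q)) ->
            exists2 s, s \in S & (p < s.1 < q) \/ (p < s.2 < q))
  (Qi Qj : seq R) :
  isQ P S Qi -> isQ P S Qj -> Qi != Qj -> Qi != [::] -> Qj != [::] ->
  (forall x, ~ (in_hull Qi x /\ in_hull Qj x))
  \/ between_consec Qi Qj \/ between_consec Qj Qi.
Proof.
move=> /isQ_class [ci ->] /isQ_class [cj ->] Hne.
case Ei: (code_class P S ci) => [//|qi ti] _.
case Ej: (code_class P S cj) => [//|qj tj] _.
rewrite -Ei -Ej.
have ci_ : code S qi = ci by apply: (@mem_class _ P); rewrite Ei inE eqxx.
have cj_ : code S qj = cj by apply: (@mem_class _ P); rewrite Ej inE eqxx.
have : code S qi != code S qj.
  by rewrite ci_ cj_; apply: contraNneq Hne => ->.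
move/code_diff => [s sS Hs].
have HI : forall q, q \in code_class P S ci -> Defs.in_itv s q = Defs.in_itv s qi.
  move=> q /mem_class Hq. exact: (itv_code _ _ _ _ _ sS (etrans Hq (esym ci_))).
have HJ : forall q, q \in code_class P S cj -> Defs.in_itv s q = Defs.in_itv s qj.
  by move=> q /mem_class Hq; exact: (itv_code _ _ _ _ _ sS (etrans Hq (esym cj_))).
case Hi: (Defs.in_itv s qi) Hs HI => Hs HI.
  have Hj : Defs.in_itv s qj = false by move: Hs; case: (Defs.in_itv s qj).
  have HA : forall q, q \in code_class P S ci -> Defs.in_itv s q by move=> q /HI.
  have HB : forall q, q \in code_class P S cj -> ~~ Defs.in_itv s q
    by move=> q /HJ ->; rewrite Hj.
  have [H|H] := @core _ (code_class P S ci) (code_class P S cj) s HA HB.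
    by left.
  by right; right.
have Hj : Defs.in_itv s qj = true by move: Hs; case: (Defs.in_itv s qj).
have HA : forall q, q \in code_class P S cj -> Defs.in_itv s q by move=> q /HJ ->.
have HB : forall q, q \in code_class P S ci -> ~~ Defs.in_itv s q
  by move=> q /HI ->.
have [H|H] := @core _ (code_class P S cj) (code_class P S ci) s HA HB.
  by left => x [h1 h2]; apply: (H x).
by right; left.
Qed.
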